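(* Let $N\ge1$, $d\ge1$, and $\mathbf{q}=(q_1,\dots,q_N)\in(\mathbb{R}^d)^N$ with $q_i\ne q_j$ for $i\ne j$. Then for all $\gamma\in(0,1]$ and $s\ge0$, $$\sum_{i=1}^N\Big\langle\sum_{j\ne i}\frac{q_i-q_j}{|q_i-q_j|^\gamma},\sum_{k\ne i}\frac{q_i-q_k}{|q_i-q_k|^{s+1}}\Big\rangle\ge 2\sum_{1\le i<j\le N}\frac{1}{|q_i-q_j|^{s+\gamma-1}}.$$ *)

(* Defs.v *)
From mathcomp Require Import all_boot all_order all_algebra.
From mathcomp Require Import reals exp.
Import Order.TTheory GRing.Theory Num.Theory.
Local Open Scope ring_scope.

Definition dotv {R : realType} {d : nat} (u v : 'rV[R]_d) : R :=
  \sum_(k < d) u 0 k * v 0 k.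

Definition enorm {R : realType} {d : nat} (u : 'rV[R]_d) : R :=
  Num.sqrt (dotv u u).

(* Main.v *)
Require Import Defs.
From mathcomp Require Import all_boot all_order all_algebra.
From mathcomp Require Import reals exp.
From mathcomp Require Import ring lra.
Import Order.TTheory GRing.Theory Num.Theory.
Local Open Scope ring_scope.
Set Implicit Arguments. Unset Strict Implicit. Unset Printing Implicit Defensive.

Lemma dotvC (R : realType) (d : nat) (u v : 'rV[R]_d) : dotv u v = dotv v u.
Proof. by rewrite /dotv; apply: eq_bigr => k _; rewrite mulrC. Qed.

Lemma dotvDl (R : realType) (d : nat) (u v w : 'rV[R]_d) :
  dotv (u + v) w = dotv u w + dotv v w.
Proof. by rewrite /dotv -big_split; apply: eq_bigr => k _; rewrite mxE mulrDl. Qed.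

Lemma dotvNl (R : realType) (d : nat) (u w : 'rV[R]_d) :
  dotv (- u) w = - dotv u w.
Proof. by rewrite /dotv -sumrN; apply: eq_bigr => k _; rewrite mxE mulNr. Qed.

Lemma dotvZl (R : realType) (d : nat) (a : R) (u w : 'rV[R]_d) :
  dotv (a *: u) w = a * dotv u w.
Proof. by rewrite /dotv mulr_sumr; apply: eq_bigr => k _; rewrite mxE mulrA. Qed.

Lemma dotv0l (R : realType) (d : nat) (w : 'rV[R]_d) : dotv 0 w = 0.
Proof. by rewrite /dotv big1 // => k _; rewrite mxE mul0r. Qed.

Lemma dotvDr (R : realType) (d : nat) (u v w : 'rV[R]_d) :
  dotv w (u + v) = dotv w u + dotv w v.
Proof. by rewrite dotvC dotvDl !(dotvC w _). Qed.

Lemma dotvNr (R : realType) (d : nat) (u w : 'rV[R]_d) :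
  dotv w (- u) = - dotv w u.
Proof. by rewrite dotvC dotvNl dotvC. Qed.

Lemma dotvZr (R : realType) (d : nat) (a : R) (u w : 'rV[R]_d) :
  dotv w (a *: u) = a * dotv w u.
Proof. by rewrite dotvC dotvZl dotvC. Qed.

Lemma dotv_suml (R : realType) (d : nat) (I : Type) (r : seq I) (P : pred I)
  (F : I -> 'rV[R]_d) (w : 'rV[R]_d) :
  dotv (\sum_(i <- r | P i) F i) w = \sum_(i <- r | P i) dotv (F i) w.
Proof.
elim/big_rec2: _ => [|i y1 y2 _ <-]; first exact: dotv0l.
by rewrite dotvDl.
Qed.

Lemma dotv_sumr (R : realType) (d : nat) (I : Type) (r : seq I) (P : pred I)
  (F : I -> 'rV[R]_d) (w : 'rV[R]_d) :
  dotv w (\sum_(i <- r | P i) F i) = \sum_(i <- r | P i) dotv w (F i).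
Proof. by rewrite dotvC dotv_suml; apply: eq_bigr => i _; rewrite dotvC. Qed.

Lemma dotvBB (R : realType) (d : nat) (a b c e : 'rV[R]_d) :
  dotv (a - b) (c - e) = dotv a c - dotv a e - dotv b c + dotv b e.
Proof. rewrite dotvDl !dotvDr !dotvNl !dotvNr; ring. Qed.

Lemma dotv_ge0 (R : realType) (d : nat) (u : 'rV[R]_d) : 0 <= dotv u u.
Proof. by apply: sumr_ge0 => k _; rewrite -expr2 sqr_ge0. Qed.

Lemma dotv_gt0 (R : realType) (d : nat) (u : 'rV[R]_d) : u != 0 -> 0 < dotv u u.
Proof.
move=> u0; rewrite lt_def dotv_ge0 andbT; apply: contra u0 => /eqP h.
have H := psumr_eq0P (fun k _ => (ltac:(rewrite -expr2 sqr_ge0) : 0 <= u 0 k * u 0 k)) h.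
 apply/eqP/matrixP => i k; rewrite (ord1 i) mxE.
by have /eqP := H isT k isT; rewrite mulf_eq0 orbb => /eqP.
Qed.

Lemma enorm_sq (R : realType) (d : nat) (u : 'rV[R]_d) : enorm u ^+ 2 = dotv u u.
Proof. by rewrite /enorm sqr_sqrtr // dotv_ge0. Qed.

Lemma enorm_ge0 (R : realType) (d : nat) (u : 'rV[R]_d) : 0 <= enorm u.
Proof. by rewrite /enorm sqrtr_ge0. Qed.

Lemma enorm_gt0 (R : realType) (d : nat) (u : 'rV[R]_d) : u != 0 -> 0 < enorm u.
Proof. by move=> u0; rewrite /enorm sqrtr_gt0 dotv_gt0. Qed.

Lemma enormB (R : realType) (d : nat) (u v : 'rV[R]_d) : enorm (u - v) = enorm (v - u).
Proof. by rewrite /enorm !dotvBB (dotvC u v); congr Num.sqrt; ring. Qed.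

Lemma dotv_CS (R : realType) (d : nat) (u v : 'rV[R]_d) :
  u != 0 -> v != 0 -> - (enorm u * enorm v) <= dotv u v.
Proof.
move=> u0 v0; set Y := enorm u; set Z := enorm v.
have Y0 : 0 < Y := enorm_gt0 u0.
have Z0 : 0 < Z := enorm_gt0 v0.
have h := dotv_ge0 (Z *: u + Y *: v).
rewrite dotvDl !dotvDr !dotvZl !dotvZr (dotvC v u) -!enorm_sq -/Y -/Z in h.
have h2 : 0 <= (Y * Z) * (2 * (Y * Z + dotv u v)) by lra.
rewrite pmulr_rge0 ?mulr_gt0 // in h2.
lra.
Qed.
Lemma core (R : realType) (x y z p1 p2 p3 ax ay az bx by_ bz : R) :
  0 < x -> 0 < y -> 0 < z -> 0 <= ax -> 0 <= ay -> 0 <= az ->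
  0 <= bx -> 0 <= by_ -> 0 <= bz ->
  y * ay <= x * ax -> z * az <= x * ax ->
  p1 + p2 = z ^+ 2 -> p1 + p3 = y ^+ 2 -> p2 + p3 = x ^+ 2 ->
  - (y * z) <= p1 -> 0 <= p2 -> 0 <= p3 ->
  0 <= (az * by_ + ay * bz) * p1 + (az * bx + ax * bz) * p2 + (ay * bx + ax * by_) * p3.
Proof.
move=> x0 y0 z0 ax0 ay0 az0 bx0 by0 bz0 hy hz e12 e13 e23 hp1 hp2 hp3.
set c1 := az * by_ + ay * bz; set c2 := az * bx + ax * bz; set c3 := ay * bx + ax * by_.
have c10 : 0 <= c1 by rewrite addr_ge0 // mulr_ge0.
have c20 : 0 <= c2 by rewrite addr_ge0 // mulr_ge0.
have c30 : 0 <= c3 by rewrite addr_ge0 // mulr_ge0.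
have [p10|p1n] := leP 0 p1.
  by rewrite !addr_ge0 // mulr_ge0.
have xyz : x <= y + z.
  have hx2 : x ^+ 2 <= (y + z) ^+ 2 by rewrite -e23; nra.
  nra.
have -> : c1 * p1 + c2 * p2 + c3 * p3 = c2 * z ^+ 2 + c3 * y ^+ 2 + (- p1) * (c2 + c3 - c1).
  have -> : p2 = z ^+ 2 - p1 by lra.
  have -> : p3 = y ^+ 2 - p1 by lra.
  ring.
have [hc|hc] := leP 0 (c2 + c3 - c1).
  have : 0 <= - p1 by lra.
  move=> hp; have := mulr_ge0 hp hc; have := mulr_ge0 c20 (sqr_ge0 z).
  have := mulr_ge0 c30 (sqr_ge0 y); lra.
have h1 : (- p1) * (c2 + c3 - c1) >= (y * z) * (c2 + c3 - c1).
  by apply: ler_wnM2r; [exact: ltW | lra].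
have h2 : c2 * z * x <= c2 * z * (y + z) by rewrite ler_wpM2l // mulr_ge0 // ltW.
have h3 : c3 * y * x <= c3 * y * (y + z) by rewrite ler_wpM2l // mulr_ge0 // ltW.
have h4 : (y * ay) * (z * bz) <= (x * ax) * (z * bz) by rewrite ler_wpM2r // mulr_ge0 // ltW.
have h5 : (z * az) * (y * by_) <= (x * ax) * (y * by_) by rewrite ler_wpM2r // mulr_ge0 // ltW.
have h6 : 0 <= z * x * az * bx by rewrite !mulr_ge0 // ltW.
have h7 : 0 <= y * x * ay * bx by rewrite !mulr_ge0 // ltW.
rewrite /c1 /c2 /c3 in h1 h2 h3 *.
nra.
Qed.

Lemma tri_real (R : realType) (A B : R -> R) (x y z p1 p2 p3 : R) :
  (forall u, 0 < u -> 0 <= A u) -> (forall u, 0 < u -> 0 <= B u) ->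
  (forall u v, 0 < u -> u <= v -> u * A u <= v * A v) ->
  0 < x -> 0 < y -> 0 < z ->
  p1 + p2 = z ^+ 2 -> p1 + p3 = y ^+ 2 -> p2 + p3 = x ^+ 2 ->
  - (y * z) <= p1 -> - (x * z) <= p2 -> - (x * y) <= p3 ->
  0 <= (A z * B y + A y * B z) * p1 + (A z * B x + A x * B z) * p2
       + (A y * B x + A x * B y) * p3.
Proof.
move=> A0 B0 mono x0 y0 z0 e12 e13 e23 h1 h2 h3.
have ax := A0 x x0. have ay := A0 y y0. have az := A0 z z0.
have bx := B0 x x0. have by_ := B0 y y0. have bz := B0 z z0.
have [p1n|p1p] := ltP p1 0.
  have hyx : y <= x by nra.
  have hzx : z <= x by nra.
  have := @core R x y z p1 p2 p3 (A x) (A y) (A z) (B x) (B y) (B z).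
  move=> /(_ x0 y0 z0 ax ay az bx by_ bz (mono _ _ y0 hyx) (mono _ _ z0 hzx)).
  move=> /(_ e12 e13 e23 h1 ltac:(nra) ltac:(nra)).
  lra.
have [p2n|p2p] := ltP p2 0.
  have hxy : x <= y by nra.
  have hzy : z <= y by nra.
  have := @core R y x z p2 p1 p3 (A y) (A x) (A z) (B y) (B x) (B z).
  move=> /(_ y0 x0 z0 ay ax az by_ bx bz (mono _ _ x0 hxy) (mono _ _ z0 hzy)).
  move=> /(_ ltac:(lra) ltac:(lra) ltac:(lra) ltac:(lra) p1p ltac:(nra)).
  lra.
have [p3n|p3p] := ltP p3 0.
  have hxz : x <= z by nra.
  have hyz : y <= z by nra.
  have := @core R z x y p3 p1 p2 (A z) (A x) (A y) (B z) (B x) (B y).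
  move=> /(_ z0 x0 y0 az ax ay bz bx by_ (mono _ _ x0 hxz) (mono _ _ y0 hyz)).
  move=> /(_ ltac:(lra) ltac:(lra) ltac:(lra) ltac:(lra) p1p p2p).
  lra.
by apply: addr_ge0; [apply: addr_ge0|]; apply: mulr_ge0 => //;
  apply: addr_ge0; apply: mulr_ge0.
Qed.

Definition Fv (R : realType) (d : nat) (A B : R -> R) (x y z : 'rV[R]_d) : R :=
  A (enorm (x - y)) * B (enorm (x - z)) * dotv (x - y) (x - z).

Lemma tri_vec (R : realType) (d : nat) (A B : R -> R) (a b c : 'rV[R]_d) :
  (forall u, 0 < u -> 0 <= A u) -> (forall u, 0 < u -> 0 <= B u) ->
  (forall u v, 0 < u -> u <= v -> u * A u <= v * A v) ->
  a != b -> a != c -> b != c ->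
  0 <= Fv A B a b c + Fv A B a c b + Fv A B b a c + Fv A B b c a
       + Fv A B c a b + Fv A B c b a.
Proof.
move=> A0 B0 mono ab ac bc.
have ab0 : a - b != 0 by rewrite subr_eq0.
have ac0 : a - c != 0 by rewrite subr_eq0.
have bc0 : b - c != 0 by rewrite subr_eq0.
have ba0 : b - a != 0 by rewrite subr_eq0 eq_sym.
have ca0 : c - a != 0 by rewrite subr_eq0 eq_sym.
have cb0 : c - b != 0 by rewrite subr_eq0 eq_sym.
have rba : enorm (b - a) = enorm (a - b) by rewrite enormB.
have rca : enorm (c - a) = enorm (a - c) by rewrite enormB.
have rcb : enorm (c - b) = enorm (b - c) by rewrite enormB.
set z := enorm (a - b) in rba *; set y := enorm (a - c) in rca *;
set x := enorm (b - c) in rcb *.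
have x0 : 0 < x by apply: enorm_gt0.
have y0 : 0 < y by apply: enorm_gt0.
have z0 : 0 < z by apply: enorm_gt0.
have e12 : dotv (a - b) (a - c) + dotv (b - a) (b - c) = z ^+ 2.
  by rewrite /z enorm_sq !dotvBB ?(dotvC b a) ?(dotvC c a) ?(dotvC c b); ring.
have e13 : dotv (a - b) (a - c) + dotv (c - a) (c - b) = y ^+ 2.
  by rewrite /y enorm_sq !dotvBB ?(dotvC b a) ?(dotvC c a) ?(dotvC c b); ring.
have e23 : dotv (b - a) (b - c) + dotv (c - a) (c - b) = x ^+ 2.
  by rewrite /x enorm_sq !dotvBB ?(dotvC b a) ?(dotvC c a) ?(dotvC c b); ring.
have h1 : - (y * z) <= dotv (a - b) (a - c).
  by have := dotv_CS ab0 ac0; rewrite -/y -/z mulrC.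
have h2 : - (x * z) <= dotv (b - a) (b - c).
  by have := dotv_CS ba0 bc0; rewrite rba -/x mulrC.
have h3 : - (x * y) <= dotv (c - a) (c - b).
  by have := dotv_CS ca0 cb0; rewrite rca rcb mulrC.
have := tri_real A0 B0 mono x0 y0 z0 e12 e13 e23 h1 h2 h3.
suff -> : Fv A B a b c + Fv A B a c b + Fv A B b a c + Fv A B b c a
       + Fv A B c a b + Fv A B c b a =
  (A z * B y + A y * B z) * dotv (a - b) (a - c)
  + (A z * B x + A x * B z) * dotv (b - a) (b - c)
  + (A y * B x + A x * B y) * dotv (c - a) (c - b) by [].
rewrite /Fv rba rca rcb -/x -/y -/z (dotvC (a - c) (a - b)) (dotvC (b - c) (b - a))
  (dotvC (c - b) (c - a)).
ring.
Qed.

Definition sum3 (R : realType) (N : nat) (H : 'I_N -> 'I_N -> 'I_N -> R) : R :=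
  \sum_(i < N) \sum_(j < N) \sum_(k < N) H i j k.

Lemma sum3_23 (R : realType) (N : nat) (H : 'I_N -> 'I_N -> 'I_N -> R) :
  sum3 H = sum3 (fun i j k => H i k j).
Proof. by rewrite /sum3; apply: eq_bigr => i _; rewrite exchange_big. Qed.

Lemma sum3_12 (R : realType) (N : nat) (H : 'I_N -> 'I_N -> 'I_N -> R) :
  sum3 H = sum3 (fun i j k => H j i k).
Proof. by rewrite /sum3 exchange_big. Qed.

Lemma sum3D (R : realType) (N : nat) (H1 H2 : 'I_N -> 'I_N -> 'I_N -> R) :
  sum3 (fun i j k => H1 i j k + H2 i j k) = sum3 H1 + sum3 H2.
Proof.
rewrite /sum3 -big_split; apply: eq_bigr => i _.
rewrite -big_split; apply: eq_bigr => j _; by rewrite -big_split.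
Qed.

Lemma sum3_ge0 (R : realType) (N : nat) (H : 'I_N -> 'I_N -> 'I_N -> R) :
  (forall i j k, 0 <= H i j k) -> 0 <= sum3 H.
Proof. by move=> h; rewrite /sum3; do 3! (apply: sumr_ge0 => ? _). Qed.

Definition Dist (N : nat) (i j k : 'I_N) : bool := [&& j != i, k != i & k != j].

Lemma DistE N (i j k : 'I_N) :
  Dist i j k = [&& i != j, i != k & j != k].
Proof. by rewrite /Dist (eq_sym j i) (eq_sym k i) (eq_sym k j). Qed.

Lemma Dist_perm N (i j k : 'I_N) :
  [/\ Dist i k j = Dist i j k, Dist j i k = Dist i j k, Dist j k i = Dist i j k,
      Dist k i j = Dist i j k & Dist k j i = Dist i j k].
Proof.
rewrite !DistE ?(eq_sym j i) ?(eq_sym k i) ?(eq_sym k j).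
by case: (i == j); case: (i == k); case: (j == k).
Qed.

Lemma sym_sum3_ge0 (R : realType) (N : nat) (F : 'I_N -> 'I_N -> 'I_N -> R) :
  (forall i j k, Dist i j k ->
     0 <= F i j k + F i k j + F j i k + F j k i + F k i j + F k j i) ->
  0 <= sum3 (fun i j k => if Dist i j k then F i j k else 0).
Proof.
move=> hG; set H := (fun i j k => if Dist i j k then F i j k else 0).
have e2 := sum3_23 H.
have e3 := sum3_12 H.
have e5 : sum3 H = sum3 (fun i j k => H k i j).
  by rewrite e3 (sum3_23 (fun i j k => H j i k)).
have e4 : sum3 H = sum3 (fun i j k => H j k i).
  by rewrite e2 (sum3_12 (fun i j k => H i k j)).
have e6 : sum3 H = sum3 (fun i j k => H k j i).
  by rewrite e4 (sum3_23 (fun i j k => H j k i)).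
have : 0 <= sum3 (fun i j k => H i j k + H i k j + H j i k + H j k i + H k i j + H k j i).
  apply: sum3_ge0 => i j k; rewrite /H.
  have [-> -> -> -> ->] := Dist_perm i j k.
  case: ifP => h; first exact: hG.
  by rewrite !addr0.
rewrite !sum3D -e2 -e3 -e4 -e5 -e6 => h.
have : 0 <= 6 * sum3 H by lra.
by rewrite pmulr_rge0.
Qed.

Lemma sum_sym (R : realType) (N : nat) (f : 'I_N -> 'I_N -> R) :
  (forall i j, f i j = f j i) ->
  \sum_(i < N) \sum_(j < N | j != i) f i j =
  2 * \sum_(i < N) \sum_(j < N | (i < j)%N) f i j.
Proof.
move=> fs.
have E : forall i : 'I_N, \sum_(j < N | j != i) f i j =
    \sum_(j < N | (i < j)%N) f i j + \sum_(j < N | (j < i)%N) f i j.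
  move=> i; rewrite (bigID (fun j : 'I_N => (i < j)%N)) /=.
  congr (_ + _); apply: eq_bigl => j; rewrite -val_eqE /=; case: ltngtP => //.
rewrite (eq_bigr _ (fun i _ => E i)) big_split /=.
suff -> : \sum_(i < N) \sum_(j < N | (j < i)%N) f i j =
  \sum_(i < N) \sum_(j < N | (i < j)%N) f i j by ring.
rewrite (eq_bigr (fun i : 'I_N => \sum_(j < N) if (j < i)%N then f i j else 0)); last first.
  by move=> i _; rewrite big_mkcond.
rewrite exchange_big; apply: eq_bigr => i _; rewrite [RHS]big_mkcond.
by apply: eq_bigr => j _; rewrite fs.
Qed.

Lemma alpha_eq (R : realType) (g r : R) : 0 < r -> r * (r `^ g)^-1 = r `^ (1 - g).
Proof.
move=> r0; rewrite powRB; last by rewrite (gt_eqF r0) implybT.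
by rewrite powRr1 // ltW.
Qed.

Lemma alpha_mono (R : realType) (g u v : R) : g <= 1 -> 0 < u -> u <= v ->
  u * (u `^ g)^-1 <= v * (v `^ g)^-1.
Proof.
move=> g1 u0 uv; have v0 : 0 < v by apply: lt_le_trans uv.
rewrite !alpha_eq //; apply: ge0_ler_powR => //; first by lra.
- by rewrite nnegrE ltW.
- by rewrite nnegrE ltW.
Qed.

Lemma diag_eq (R : realType) (g s r : R) : 0 < r ->
  (r `^ g)^-1 * (r `^ (s + 1))^-1 * r ^+ 2 = (r `^ (s + g - 1))^-1.
Proof.
move=> r0.
have e : r `^ (s + 1) = r `^ (s + g - 1) * r `^ (2 - g).
  rewrite -powRD; last by rewrite (gt_eqF r0) implybT.
  by have -> : s + g - 1 + (2 - g) = s + 1 by ring.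
have e2 : r `^ (2 - g) = r ^+ 2 / r `^ g.
  rewrite powRB; last by rewrite (gt_eqF r0) implybT.
  by rewrite powR_mulrn // ltW.
have h1 : r `^ g != 0 by rewrite gt_eqF // powR_gt0.
have h2 : r `^ (s + g - 1) != 0 by rewrite gt_eqF // powR_gt0.
rewrite e e2; field.
by rewrite h1 h2 gt_eqF.
Qed.

Theorem lemmaA1 (R : realType) (N d : nat) (hN : (1 <= N)%N) (hd : (1 <= d)%N)
  (q : 'I_N -> 'rV[R]_d) (hq : injective q) (gamma s : R)
  (hg0 : 0 < gamma) (hg1 : gamma <= 1) (hs : 0 <= s) :
  \sum_(i < N)
     dotv (\sum_(j < N | j != i) ((enorm (q i - q j)) `^ gamma)^-1 *: (q i - q j))
          (\sum_(k < N | k != i) ((enorm (q i - q k)) `^ (s + 1))^-1 *: (q i - q k))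
  >= 2 * \sum_(i < N) \sum_(j < N | (i < j)%N)
          ((enorm (q i - q j)) `^ (s + gamma - 1))^-1.
Proof.
pose A := fun x : R => (x `^ gamma)^-1.
pose B := fun x : R => (x `^ (s + 1))^-1.
pose F := fun i j k : 'I_N => Fv A B (q i) (q j) (q k).
have qne : forall i j : 'I_N, i != j -> q i != q j.
  by move=> i j ij; apply: contra ij => /eqP/hq ->.
have step1 : \sum_(i < N)
     dotv (\sum_(j < N | j != i) ((enorm (q i - q j)) `^ gamma)^-1 *: (q i - q j))
          (\sum_(k < N | k != i) ((enorm (q i - q k)) `^ (s + 1))^-1 *: (q i - q k))
   = \sum_(i < N) \sum_(j < N | j != i) \sum_(k < N | k != i) F i j k.
  apply: eq_bigr => i _; rewrite dotv_suml; apply: eq_bigr => j _.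
  rewrite dotvZl dotv_sumr mulr_sumr; apply: eq_bigr => k _.
  by rewrite dotvZr /F /Fv /A /B mulrA.
have step2 : forall i : 'I_N,
    \sum_(j < N | j != i) \sum_(k < N | k != i) F i j k =
    \sum_(j < N | j != i) F i j j
    + \sum_(j < N) \sum_(k < N) (if Dist i j k then F i j k else 0).
  move=> i.
  rewrite (eq_bigr (fun j => F i j j + \sum_(k < N | (k != i) && (k != j)) F i j k));
    last by move=> j ji; rewrite (bigD1 j).
  rewrite big_split /=; congr (_ + _).
  rewrite [LHS]big_mkcond /=; apply: eq_bigr => j _.
  rewrite /Dist; case: (j != i) => /=; last by rewrite big1 // => k _.
  by rewrite big_mkcond.
have diag : forall i j : 'I_N, j != i ->
    F i j j = (enorm (q i - q j) `^ (s + gamma - 1))^-1.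
  move=> i j ji; rewrite /F /Fv -enorm_sq /A /B; apply: diag_eq.
  by apply: enorm_gt0; rewrite subr_eq0; apply: qne; rewrite eq_sym.
rewrite step1 (eq_bigr _ (fun i _ => step2 i)) big_split /=.
have -> : \sum_(i < N) \sum_(j < N | j != i) F i j j = \sum_(i < N) \sum_(j < N | j != i)
     (enorm (q i - q j) `^ (s + gamma - 1))^-1.
  by apply: eq_bigr => i _; apply: eq_bigr => j ji; apply: diag.
rewrite sum_sym; last by move=> i j; rewrite enormB.
rewrite lerDl.
have := @sym_sum3_ge0 R N F; rewrite /sum3; apply.
move=> i j k; rewrite DistE => /and3P[ij ik jk].
apply: tri_vec; try exact: qne.
- by move=> u u0; rewrite /A invr_ge0 powR_ge0.
- by move=> u u0; rewrite /B invr_ge0 powR_ge0.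
- by move=> u v u0 uv; apply: alpha_mono.
Qed.
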